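(* Run Variation-aware UCRL for $T$ steps, and assume that for every episode $k$ (started at a step $t_k\le T$) the plausible set $\mathcal M_k$ contains all MDPs $M_\tau$, $\tau=1,\dots,T$. Then for all such $k$ and all states $s$, \[v^*_T(s)\le T\tilde\rho_k+D.\]
   Context: Let $\mathcal S$ be a finite set of $S$ states and $\mathcal A$ a finite set of $A$ actions. A (time-homogeneous) MDP has mean rewards $\bar r(s,a)\in[0,1]$ and transition probabilities $p(\cdot\mid s,a)$; it is communicating if every state can be reached from every other with positive probability by suitable actions; its diameter is $\max_{s\ne s'}\min_\pi\mathbb E[T(s'\mid s,\pi)]$ with $T(s'\mid s,\pi)$ the first time $s'$ is reached from $s$ under stationary policy $\pi$. $\rho(M,\pi)=\lim_{n}\frac1n\mathbb E[\sum_{t=1}^nr_t]$, $\rho^*(M)=\max_\pi\rho(M,\pi)$. Changing environment: for every step $t$ there is an MDP $M_t=(\mathcal S,\mathcal A,\bar r_t,p_t,s_1)$ (fixed in advance); at step $t$ in state $s_t$ the learner chooses $a_t$, receives a reward $r_t\in[0,1]$ with mean $\bar r_t(s_t,a_t)$, and moves to $s_{t+1}\sim p_t(\cdot\mid s_t,a_t)$. Every $M_t$ is communicating with diameter at most $D$. $v^*_T(s)$ is the maximal expected sum of the first $T$ rewards achievable by any (possibly time- and history-dependent) policy started in $s$ in this environment. Variation-aware UCRL (inputs $\delta\in(0,1)$, $\tilde V^r,\tilde V^p\ge0$) proceeds in episodes $k=1,2,\dots$ starting at steps $t_k$ ($t_1=1$). $N_k(s,a)$ is the number of steps $\tau<t_k$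 with $(s_\tau,a_\tau)=(s,a)$; $\hat r_k(s,a)=\sum_{\tau<t_k}r_\tau\mathbb 1\{s_\tau=s,a_\tau=a\}/\max(1,N_k(s,a))$, $\hat p_k(s'\mid s,a)=\#\{\tau<t_k:s_\tau=s,a_\tau=a,s_{\tau+1}=s'\}/\max(1,N_k(s,a))$. The plausible set $\mathcal M_k$ consists of all MDPs with rewards $\tilde r$, transitions $\tilde p$ satisfying for all $(s,a)$: $|\tilde r(s,a)-\hat r_k(s,a)|\le\tilde V^r+\sqrt{8\log(8SAt_k^3/\delta)/\max(1,N_k(s,a))}$ and $\|\tilde p(\cdot\mid s,a)-\hat p_k(\cdot\mid s,a)\|_1\le\tilde V^p+\sqrt{8S\log(8SAt_k^3/\delta)/\max(1,N_k(s,a))}$. The optimistic value is $\tilde\rho_k=\max_{M'\in\mathcal M_k}\rho^*(M')$; the algorithm plays an optimal policy of a maximizing MDP $\tilde M_k\in\mathcal M_k$ during episode $k$, which lasts as long as $v_k(s_t,\tilde\pi_k(s_t))<\max(1,N_k(s_t,\tilde\pi_k(s_t)))$ where $v_k$ counts visits in episode $k$. *)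

(* Defs.v *)
From mathcomp Require Import all_boot all_order all_algebra.
From mathcomp Require Import all_classical all_reals all_analysis.
Set Implicit Arguments.
Unset Strict Implicit.
Unset Printing Implicit Defensive.
Import Order.TTheory GRing.Theory Num.Theory.
Local Open Scope ring_scope.
Local Open Scope classical_set_scope.

Section MDP.
Context {R : realType} {S A : finType}.

Definition is_reward (r : S -> A -> R) : Prop :=
  forall s a, 0 <= r s a <= 1.

Definition is_kernel (p : S -> A -> S -> R) : Prop :=
  forall s a, (forall s', 0 <= p s a s') /\ \sum_(s' : S) p s a s' = 1.

Fixpoint state_dist (p : S -> A -> S -> R) (pi : S -> A) (s0 : S) (n : nat)
  : S -> R :=
  match n with
  | 0 => fun s => (s == s0)%:R
  | n'.+1 => fun s' => \sum_(s : S) state_dist p pi s0 n' s * p s (pi s) s'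
  end.

Definition exp_reward_sum (r : S -> A -> R) (p : S -> A -> S -> R)
  (pi : S -> A) (s0 : S) (n : nat) : R :=
  \sum_(0 <= t < n) \sum_(s : S) state_dist p pi s0 t s * r s (pi s).

Definition gain (r : S -> A -> R) (p : S -> A -> S -> R) (pi : S -> A)
  (s0 : S) : R :=
  limn (fun n : nat => ((n%:R)^-1 * exp_reward_sum r p pi s0 n : R^o)).

Definition rho_star (r : S -> A -> R) (p : S -> A -> S -> R) (s0 : S) : R :=
  sup [set gain r p pi s0 | pi in [set: S -> A]].

(** Taboo distribution: mass at time n on paths started at s that have not
    visited s' at times 1..n (nor at time 0). *)
Fixpoint taboo (p : S -> A -> S -> R) (pi : S -> A) (s s' : S) (n : nat)
  : S -> R :=
  match n with
  | 0 => fun y => (y == s)%:R * (y != s')%:R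
  | n'.+1 => fun y =>
      (y != s')%:R * \sum_(x : S) taboo p pi s s' n' x * p x (pi x) y
  end.

Definition prob_not_hit (p : S -> A -> S -> R) (pi : S -> A) (s s' : S)
  (n : nat) : R := \sum_(y : S) taboo p pi s s' n y.

(** E[T(s'|s,pi)] = sum_{n>=0} P(T > n), possibly +oo. *)
Definition exp_hit_time (p : S -> A -> S -> R) (pi : S -> A) (s s' : S)
  : \bar R := (\sum_(n <oo) (prob_not_hit p pi s s' n)%:E)%E.

(** Diameter: max_{s <> s'} min_pi E[T(s'|s,pi)]  (0 if |S| <= 1). *)
Definition diameter (p : S -> A -> S -> R) : \bar R :=
  ereal_sup ([set 0%E] `|`
    [set ereal_inf [set exp_hit_time p pi ss.1 ss.2 | pi in [set: S -> A]]
      | ss in [set ss : S * S | ss.1 != ss.2]]).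

Definition communicating (p : S -> A -> S -> R) : Prop :=
  forall s s', s != s' ->
    exists (pi : S -> A) (n : nat), 0 < 1 - prob_not_hit p pi s s' n.

(** Changing environment: r t, p t for t >= 1 are the mean rewards and
    transitions of M_t.  History-dependent randomized policies. *)
Definition hpolicy := seq (S * A) -> S -> A -> R.

Definition is_hpolicy (pi : hpolicy) : Prop :=
  forall h x, (forall a, 0 <= pi h x a) /\ \sum_(a : A) pi h x a = 1.

Fixpoint exp_return (r : nat -> S -> A -> R) (p : nat -> S -> A -> S -> R)
  (pi : hpolicy) (n t : nat) (h : seq (S * A)) (x : S) : R :=
  match n with
  | 0 => 0
  | n'.+1 => \sum_(a : A) pi h x a *
      (r t x a + \sum_(y : S) p t x a y *
                   exp_return r p pi n' t.+1 (rcons h (x, a)) y)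
  end.

Definition vstar (r : nat -> S -> A -> R) (p : nat -> S -> A -> S -> R)
  (T : nat) (s : S) : R :=
  sup [set exp_return r p pi T 1 [::] s | pi in is_hpolicy].

(** Empirical quantities at episode start tk, from the run's history:
    st tau = s_tau, act tau = a_tau, rew tau = r_tau (tau >= 1). *)
Definition Ncount (st : nat -> S) (act : nat -> A) (tk : nat) (s : S) (a : A)
  : nat := \sum_(1 <= tau < tk) ((st tau == s) && (act tau == a) : nat).

Definition rhat (st : nat -> S) (act : nat -> A) (rew : nat -> R) (tk : nat)
  (s : S) (a : A) : R :=
  (\sum_(1 <= tau < tk) ((st tau == s) && (act tau == a))%:R * rew tau)
    / (maxn 1 (Ncount st act tk s a))%:R.

Definition phat (st : nat -> S) (act : nat -> A) (tk : nat)
  (s : S) (a : A) (s' : S) : R :=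
  (\sum_(1 <= tau < tk)
      ((st tau == s) && (act tau == a) && (st tau.+1 == s'))%:R)
    / (maxn 1 (Ncount st act tk s a))%:R.

Definition log_term (delta : R) (tk : nat) : R :=
  ln (8 * #|S|%:R * #|A|%:R * tk%:R ^+ 3 / delta).

Definition plausible (delta Vr Vp : R) (st : nat -> S) (act : nat -> A)
  (rew : nat -> R) (tk : nat)
  (r' : S -> A -> R) (p' : S -> A -> S -> R) : Prop :=
  is_reward r' /\ is_kernel p' /\
  forall s a,
    `| r' s a - rhat st act rew tk s a |
      <= Vr + Num.sqrt (8 * log_term delta tk
                        / (maxn 1 (Ncount st act tk s a))%:R) /\
    \sum_(s' : S) `| p' s a s' - phat st act tk s a s' |
      <= Vp + Num.sqrt (8 * #|S|%:R * log_term delta tk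
                        / (maxn 1 (Ncount st act tk s a))%:R).

(** Optimistic value rho~_k = max_{M' in M_k} rho*(M'); the MDPs of M_k have
    initial state s1. *)
Definition rho_tilde (delta Vr Vp : R) (st : nat -> S) (act : nat -> A)
  (rew : nat -> R) (tk : nat) (s1 : S) : R :=
  sup [set rho_star rp.1 rp.2 s1
      | rp in [set rp : (S -> A -> R) * (S -> A -> S -> R)
               | plausible delta Vr Vp st act rew tk rp.1 rp.2]].

End MDP.

(* Main.v *)
Require Import Defs.
From mathcomp Require Import all_boot all_order all_algebra.
From mathcomp Require Import all_classical all_reals all_analysis.
From mathcomp Require Import lra.
Import Order.TTheory GRing.Theory Num.Theory.
Local Open Scope ring_scope.
Local Open Scope classical_set_scope.
Set Implicit Arguments.
Unset Strict Implicit.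
Unset Printing Implicit Defensive.

Section LinAlg.
Variable (R : fieldType) (S : finType).

Definition op (K : S -> S -> R) (x : S -> R) : S -> R :=
  fun s => \sum_(y : S) K s y * x y.

Let n := #|S|.
Definition Kmx (K : S -> S -> R) : 'M[R]_n :=
  \matrix_(i, j) K (enum_val j) (enum_val i).
Definition vec (x : S -> R) : 'rV[R]_n := \row_i x (enum_val i).
Definition unvec (v : 'rV[R]_n) : S -> R := fun s => v 0 (enum_rank s).

Lemma unvecK x s : unvec (vec x) s = x s.
Proof. by rewrite /unvec /vec mxE enum_rankK. Qed.

Lemma vecK v : vec (unvec v) = v.
Proof. by apply/rowP => i; rewrite /vec /unvec mxE enum_valK. Qed.

Lemma vec_op K x : vec x *m Kmx K = vec (op K x).
Proof.
apply/rowP => j; rewrite !mxE /op.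
rewrite (big_enum_val (A := S) (fun y => K (enum_val j) y * x y)) /=.
apply: eq_bigr => i _; rewrite !mxE mulrC; done.
Qed.

Lemma unvec_op K v s : op K (unvec v) s = unvec (v *m Kmx K) s.
Proof. by rewrite -{2}(vecK v) vec_op unvecK. Qed.

Lemma vec_inj x y : vec x = vec y -> forall s, x s = y s.
Proof. by move=> e s; rewrite -unvecK e unvecK. Qed.

Lemma surj_of_inj K :
  (forall x, (forall s, op K x s = 0) -> forall s, x s = 0) ->
  forall b, exists x, forall s, op K x s = b s.
Proof.
move=> inj b.
have kz : kermx (Kmx K) == 0.
  apply/eqP/row_matrixP => i; rewrite row0.
  have h : row i (kermx (Kmx K)) *m Kmx K = 0 by rewrite -row_mul mulmx_ker row0.
  have := inj (unvec (row i (kermx (Kmx K)))).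
  move=> H; rewrite -[row i _]vecK.
  have -> : vec (unvec (row i (kermx (Kmx K)))) = vec (fun _ => 0).
    apply/rowP => j; rewrite !mxE H //.
    by move=> s; rewrite unvec_op h /unvec mxE.
  by apply/rowP => j; rewrite !mxE.
have U : Kmx K \in unitmx by rewrite -row_free_unit -kermx_eq0.
exists (unvec (vec b *m invmx (Kmx K))) => s.
by rewrite unvec_op mulmxKV // unvecK.
Qed.

Lemma ergodic_dec K :
  (forall x y, (forall s, op K y s = 0) -> (forall s, op K x s = y s) ->
     forall s, y s = 0) ->
  forall b, exists u w, (forall s, op K u s = 0) /\
                        (forall s, b s = u s + op K w s).
Proof.
move=> hyp b.
set k := kermx (Kmx K).
have cap0 : (k :&: Kmx K)%MS = 0.
  apply/row_matrixP => i; rewrite row0.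
  set y := row i _.
  have yk : (y <= k)%MS by apply: submx_trans (row_sub i _) (capmxSl _ _).
  have yK : (y <= Kmx K)%MS by apply: submx_trans (row_sub i _) (capmxSr _ _).
  move/sub_kermxP: yk => yk0.
  case/submxP: yK => x ex.
  have H := hyp (unvec x) (unvec y).
  rewrite -[y]vecK.
  have -> : vec (unvec y) = vec (fun _ => 0).
    apply/rowP => j; rewrite !mxE H //.
    - by move=> s; rewrite unvec_op yk0 /unvec mxE.
    - by move=> s; rewrite unvec_op -ex.
  by apply/rowP => j; rewrite !mxE.
have full : row_full (k + Kmx K)%MS.
  have := mxrank_sum_cap k (Kmx K); rewrite cap0 mxrank0 addn0 /k mxrank_ker.
  rewrite subnK ?rank_leq_row // => e.
  by rewrite /row_full e.
have : (vec b <= k + Kmx K)%MS by apply: submx_full.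
case/sub_addsmxP => [[u1 u2]] /= eb.
exists (unvec (u1 *m k)), (unvec u2); split.
- move=> s; rewrite unvec_op -mulmxA mulmx_ker mulmx0 /unvec mxE //.
- move=> s; rewrite unvec_op -unvecK eb /unvec mxE //.
Qed.

End LinAlg.

Section Markov.
Variable (R : realType) (S : finType).

Definition stoch (P : S -> S -> R) :=
  forall s, (forall y, 0 <= P s y) /\ \sum_(y : S) P s y = 1.

Definition Pop (P : S -> S -> R) (x : S -> R) : S -> R :=
  fun s => \sum_(y : S) P s y * x y.

Lemma ex_argmin (f : S -> R) (t0 : S) : exists i, forall j, f i <= f j.
Proof.
case: (arg_minP f (P := predT) (i0 := t0) isT) => i _ H.
by exists i => j; apply: H.
Qed.

Lemma sum_delta (s : S) (x : S -> R) : \sum_(y : S) (s == y)%:R * x y = x s.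
Proof.
rewrite (bigD1 s) //= eqxx mul1r big1 ?addr0 // => y /negbTE.
by rewrite eq_sym => ->; rewrite mul0r.
Qed.

Lemma Pop_le P x c s : stoch P -> (forall y, x y <= c) -> Pop P x s <= c.
Proof.
move=> /(_ s) [P0 P1] xc; rewrite /Pop.
have -> : c = \sum_y P s y * c by rewrite -mulr_suml P1 mul1r.
by apply: ler_sum => y _; apply: ler_wpM2l.
Qed.

Lemma Pop_ge P x c s : stoch P -> (forall y, c <= x y) -> c <= Pop P x s.
Proof.
move=> /(_ s) [P0 P1] xc; rewrite /Pop.
have -> : c = \sum_y P s y * c by rewrite -mulr_suml P1 mul1r.
by apply: ler_sum => y _; apply: ler_wpM2l.
Qed.

Lemma PopD P x y s : Pop P (fun t => x t + y t) s = Pop P x s + Pop P y s.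
Proof. by rewrite /Pop -big_split; apply: eq_bigr => t _; rewrite mulrDr. Qed.

Lemma PopZ P c x s : Pop P (fun t => c * x t) s = c * Pop P x s.
Proof. by rewrite /Pop mulr_sumr; apply: eq_bigr => t _; rewrite mulrCA. Qed.

Lemma PopC P c s : stoch P -> Pop P (fun _ => c) s = c.
Proof. by move=> /(_ s) [_ P1]; rewrite /Pop -mulr_suml P1 mul1r. Qed.

Lemma PopN P x s : Pop P (fun t => - x t) s = - Pop P x s.
Proof. by rewrite /Pop -sumrN; apply: eq_bigr => t _; rewrite mulrN. Qed.

Lemma min_principle (g : R) P x d :
  0 <= g < 1 -> stoch P ->
  (forall u, x u = d u + g * Pop P x u) -> (forall u, 0 <= d u) ->
  forall u, 0 <= x u.
Proof.
move=> /andP[g0 g1] sP ex d0 u.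
case: (ex_argmin x u) => m hm.
have h1 : x m <= Pop P x m by apply: Pop_ge.
have h2 : g * x m <= x m.
  rewrite [in X in _ <= X]ex.
  have h3 : g * x m <= g * Pop P x m by apply: ler_wpM2l.
  apply: (le_trans h3); by rewrite lerDr.
have : 0 <= x m.
  have : 0 <= (1 - g) * x m by rewrite mulrBl mul1r subr_ge0.
  by rewrite pmulr_rge0 // subr_gt0.
move=> xm0; apply: le_trans xm0 (hm u).
Qed.

Lemma archi_le0 (a C : R) : (forall k : nat, k%:R * a <= C) -> a <= 0.
Proof.
move=> H; rewrite leNgt; apply/negP => a0.
have C0 : 0 <= C by have := H 0%N; rewrite mul0r.
have := archi_boundP (divr_ge0 C0 (ltW a0)).
rewrite ltr_pdivrMr // => /(lt_le_trans) /(_ (H _)).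
by rewrite ltxx.
Qed.

Lemma disc_exists (g : R) P (rho : S -> R) :
  0 <= g < 1 -> stoch P ->
  exists V, forall s, V s = rho s + g * Pop P V s.
Proof.
move=> gb sP.
set K := fun s y => (s == y)%:R - g * P s y.
have opK x s : op K x s = x s - g * Pop P x s.
  rewrite /op /K /Pop.
  under eq_bigr do rewrite mulrBl.
  by rewrite big_split /= sum_delta sumrN mulr_sumr; congr (_ - _);
    apply: eq_bigr => y _; rewrite mulrA.
have inj : forall x, (forall s, op K x s = 0) -> forall s, x s = 0.
  move=> x hx s; apply/eqP; rewrite eq_le; apply/andP; split.
  - rewrite -oppr_ge0; apply: (min_principle (x := fun t => - x t) (d := fun _ => 0) gb sP) => // t.
    by rewrite PopN add0r mulrN; congr (- _); apply/eqP; rewrite -subr_eq0 -opK hx.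
  - apply: (min_principle (d := fun _ => 0) gb sP) => // t.
    by rewrite add0r; apply/eqP; rewrite -subr_eq0 -opK hx.
case: (surj_of_inj inj rho) => V hV.
by exists V => s; rewrite -hV opK subrK.
Qed.

End Markov.

Section Gain.
Variable (R : realType) (S A : finType).
Implicit Types (r : S -> A -> R) (p : S -> A -> S -> R) (pi : S -> A).

Definition Pk p pi : S -> S -> R := fun s y => p s (pi s) y.

Lemma stoch_Pk p pi : is_kernel p -> stoch (Pk p pi).
Proof. by move=> kp s; have [h1 h2] := kp s (pi s). Qed.

Definition Ex p pi s0 t (f : S -> R) := \sum_(s : S) state_dist p pi s0 t s * f s.

Lemma sd_ge0 p pi s0 t s : is_kernel p -> 0 <= state_dist p pi s0 t s.
Proof.
move=> kp; elim: t s => [|t IH] s /=; first by rewrite ler0n.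
by apply: sumr_ge0 => x _; apply: mulr_ge0 => //; have [h _] := kp x (pi x).
Qed.

Lemma Ex_succ p pi s0 t f : Ex p pi s0 t.+1 f = Ex p pi s0 t (Pop (Pk p pi) f).
Proof.
rewrite /Ex /Pop /Pk /=.
under eq_bigr do rewrite mulr_suml.
rewrite exchange_big /=; apply: eq_bigr => x _.
by rewrite mulr_sumr; apply: eq_bigr => y _; rewrite mulrA.
Qed.

Lemma Ex0 p pi s0 f : Ex p pi s0 0 f = f s0.
Proof. by rewrite /Ex /=; under eq_bigr do rewrite eq_sym; rewrite sum_delta. Qed.

Lemma ExD p pi s0 t f g : Ex p pi s0 t (fun s => f s + g s) = Ex p pi s0 t f + Ex p pi s0 t g.
Proof. by rewrite /Ex -big_split; apply: eq_bigr => s _; rewrite mulrDr. Qed.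

Lemma ExN p pi s0 t f : Ex p pi s0 t (fun s => - f s) = - Ex p pi s0 t f.
Proof. by rewrite /Ex -sumrN; apply: eq_bigr => s _; rewrite mulrN. Qed.

Lemma Ex_le p pi s0 t f c : is_kernel p -> (forall s, f s <= c) -> Ex p pi s0 t f <= c.
Proof.
move=> kp; elim: t f => [|t IH] f fc; first by rewrite Ex0.
by rewrite Ex_succ; apply: IH => s; apply: Pop_le => //; apply: stoch_Pk.
Qed.

Lemma Ex_ge p pi s0 t f c : is_kernel p -> (forall s, c <= f s) -> c <= Ex p pi s0 t f.
Proof.
move=> kp; elim: t f => [|t IH] f fc; first by rewrite Ex0.
by rewrite Ex_succ; apply: IH => s; apply: Pop_ge => //; apply: stoch_Pk.
Qed.

Lemma Ex_fix p pi s0 t u : (forall s, Pop (Pk p pi) u s = u s) -> Ex p pi s0 t u = u s0.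
Proof.
move=> hu; elim: t => [|t IH]; first by rewrite Ex0.
by rewrite Ex_succ -IH /Ex; apply: eq_bigr => s _; rewrite hu.
Qed.

Lemma ERS_Ex r p pi s0 n :
  exp_reward_sum r p pi s0 n = \sum_(0 <= t < n) Ex p pi s0 t (fun s => r s (pi s)).
Proof. by []. Qed.

Lemma abs_bound (x : S -> R) s : `|x s| <= \sum_(t : S) `|x t|.
Proof.
rewrite (bigD1 s) //= lerDl; apply: sumr_ge0 => t _; exact: normr_ge0.
Qed.

Lemma ergodic_hyp P : stoch P ->
  forall x y : S -> R,
  (forall s, Pop P y s - y s = 0) -> (forall s, Pop P x s - x s = y s) ->
  forall s, y s = 0.
Proof.
move=> sP x y hy hx s.
have Py t : Pop P y t = y t by apply/eqP; rewrite -subr_eq0 hy.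
have Px t : Pop P x t = x t + y t by rewrite -hx addrC subrK.
have it k : iter k (Pop P) x = (fun t => x t + k%:R * y t).
  elim: k => [|k IH] /=; first by apply: funext => t; rewrite mul0r addr0.
  rewrite IH; apply: funext => t.
  by rewrite PopD PopZ Px Py -addrA mulrS mulrDl mul1r.
set c := \sum_(t : S) `|x t|.
have bd k t : `|iter k (Pop P) x t| <= c.
  elim: k t => [|k IH] t /=; first exact: abs_bound.
  rewrite ler_norml; apply/andP; split.
  - apply: Pop_ge => // z; have := IH z; rewrite ler_norml => /andP[]//.
  - apply: Pop_le => // z; have := IH z; rewrite ler_norml => /andP[]//.
have : `|y s| <= 0.
  apply: (@archi_le0 _ _ (c + c)) => k.
  have e : k%:R * `|y s| = `|iter k (Pop P) x s - x s|.
    by rewrite it addrAC subrr add0r normrM ger0_norm ?ler0n.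
  rewrite e; apply: le_trans (ler_normB _ _) _.
  by apply: lerD; [apply: bd | apply: abs_bound].
by rewrite normr_le0 => /eqP.
Qed.

Lemma gain_spec r p pi s0 : is_kernel p ->
  exists g Kc, (forall n, `|exp_reward_sum r p pi s0 n - n%:R * g| <= Kc) /\
               gain r p pi s0 = g.
Proof.
move=> kp.
have sP := stoch_Pk pi kp.
set P := Pk p pi.
set K := fun s y => P s y - (s == y)%:R.
have opK x s : op K x s = Pop P x s - x s.
  rewrite /op /K /Pop.
  under eq_bigr do rewrite mulrBl.
  by rewrite big_split /= sumrN sum_delta.
have hyp : forall x y, (forall s, op K y s = 0) -> (forall s, op K x s = y s) ->
                       forall s, y s = 0.
  move=> x y hy hx; apply: (ergodic_hyp sP (x := x)) => s; by rewrite -opK.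
case: (ergodic_dec hyp (fun s => r s (pi s))) => u [w [hu hrw]].
have Pu s : Pop P u s = u s by apply/eqP; rewrite -subr_eq0 -opK hu.
have ERS n : exp_reward_sum r p pi s0 n = n%:R * u s0 + (Ex p pi s0 n w - w s0).
  rewrite ERS_Ex.
  have e t : Ex p pi s0 t (fun s => r s (pi s)) = u s0 + (Ex p pi s0 t.+1 w - Ex p pi s0 t w).
    have -> : (fun s => r s (pi s)) = (fun s => u s + (Pop P w s + - w s)).
      by apply: funext => s; rewrite hrw opK.
    by rewrite ExD ExD ExN Ex_fix // Ex_succ.
  under eq_bigr do rewrite e.
  rewrite big_split /= telescope_sumr // Ex0 sumr_const_nat subn0.
  by rewrite mulr_natl.
set c := \sum_(t : S) `|w t|.
have bdw n : `|Ex p pi s0 n w - w s0| <= c + c.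
  apply: le_trans (ler_normB _ _) _; apply: lerD; last exact: abs_bound.
  rewrite ler_norml; apply/andP; split.
  - apply: Ex_ge => // s; have := abs_bound w s; rewrite -/c => h.
    by rewrite lerNl; apply: le_trans h; rewrite -normrN ler_norm.
  - by apply: Ex_le => // s; apply: le_trans (ler_norm _) (abs_bound w s).
exists (u s0), (c + c); split.
  by move=> n; rewrite ERS addrC addKr.
rewrite /gain.
suff H : (fun n : nat => (n%:R^-1 * exp_reward_sum r p pi s0 n : R^o)) @ \oo --> (u s0 : R^o).
  exact: (cvg_lim _ H).
apply/cvgrPdist_le => eps eps0.
have c0 : 0 <= c + c by apply: le_trans (bdw 0%N); exact: normr_ge0.
near=> n.
have n0 : (0 < n)%N by near: n; exists 1%N.
have hN : ((c + c) / eps) < n%:R.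
  have := archi_boundP (divr_ge0 c0 (ltW eps0)) => h.
  apply: lt_le_trans h _; rewrite ler_nat.
  by near: n; exists (Num.bound ((c + c) / eps)).
rewrite ERS mulrDr mulrA mulVf ?pnatr_eq0 -?lt0n // mul1r opprD addrA subrr add0r normrN.
rewrite normrM ger0_norm ?invr_ge0 ?ler0n //.
rewrite -ler_pdivlMl ?invr_gt0 ?ltr0n // invrK.
apply: le_trans (bdw n) _.
rewrite -ler_pdivrMr //; exact: ltW.
Unshelve. all: end_near.
Qed.

End Gain.

Section GainBounds.
Variable (R : realType) (S A : finType).
Implicit Types (r : S -> A -> R) (p : S -> A -> S -> R) (pi : S -> A).

Lemma ERS_bounds r p pi s0 n : is_reward r -> is_kernel p ->
  0 <= exp_reward_sum r p pi s0 n <= n%:R.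
Proof.
move=> rr kp; rewrite ERS_Ex; apply/andP; split.
  apply: sumr_ge0 => t _; apply: Ex_ge => // s; by have /andP[] := rr s (pi s).
have -> : (n%:R : R) = \sum_(0 <= t < n) (1 : R) by rewrite sumr_const_nat subn0.
apply: ler_sum => t _; apply: Ex_le => // s; by have /andP[] := rr s (pi s).
Qed.

Lemma gain_lb r p pi s0 c K0 : is_kernel p ->
  (forall n, n%:R * c - K0 <= exp_reward_sum r p pi s0 n) -> c <= gain r p pi s0.
Proof.
move=> kp H; have [g [Kc [hK ->]]] := gain_spec r pi s0 kp.
rewrite -subr_le0; apply: (@archi_le0 _ _ (K0 + Kc)) => n.
have := H n; have := hK n; rewrite ler_norml => /andP[_ h2] h1.
rewrite mulrBr; lra.
Qed.

Lemma gain_01 r p pi s0 : is_reward r -> is_kernel p ->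
  0 <= gain r p pi s0 <= 1.
Proof.
move=> rr kp; have [g [Kc [hK ->]]] := gain_spec r pi s0 kp.
apply/andP; split.
  rewrite -oppr_le0; apply: (@archi_le0 _ _ Kc) => n.
  have := hK n; have /andP[h3 h4] := ERS_bounds pi s0 n rr kp.
  rewrite ler_norml => /andP[h1 h2]; rewrite mulrN; lra.
rewrite -subr_le0; apply: (@archi_le0 _ _ Kc) => n.
have := hK n; have /andP[h3 h4] := ERS_bounds pi s0 n rr kp.
rewrite ler_norml => /andP[h1 h2]; rewrite mulrBr mulr1; lra.
Qed.

Lemma sup_01 (E : set R) : (forall x, E x -> 0 <= x <= 1) -> 0 <= sup E <= 1.
Proof.
move=> H; case: (pselect (E !=set0)) => [ne|ne].
  have hs : has_sup E by split => //; exists 1 => x /H /andP[].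
  case: ne => x Ex; apply/andP; split.
    by apply: le_trans (sup_upper_bound hs Ex); have /andP[] := H x Ex.
  by apply: ge_sup; [exists x | move=> y /H /andP[]].
have -> : E = set0.
  by apply/seteqP; split => x // Ex; exfalso; apply: ne; exists x.
by rewrite sup0 lexx ler01.
Qed.

Lemma le_sup01 (E : set R) x : (forall y, E y -> y <= 1) -> E x -> x <= sup E.
Proof.
move=> H Ex; apply: sup_upper_bound => //; split; first by exists x.
by exists 1.
Qed.

Lemma rho_star_01 r p s0 : is_reward r -> is_kernel p -> 0 <= rho_star r p s0 <= 1.
Proof.
move=> rr kp; apply: sup_01 => x [pi _ <-]; exact: gain_01.
Qed.

End GainBounds.

Lemma ex_argmax (R : realType) (T0 : finType) (f : T0 -> R) (t0 : T0) :
  exists i, forall j, f j <= f i.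
Proof.
case: (arg_maxP f (P := predT) (i0 := t0) isT) => i _ H.
by exists i => j; apply: H.
Qed.

Section Core.
Variable (R : realType) (S A : finType).
Variables (r : nat -> S -> A -> R) (p : nat -> S -> A -> S -> R).
Variables (T' : nat) (D g : R) (a0 : A).
Let T := T'.+1.
Hypothesis Hrk : forall t, (0 < t)%N -> is_reward (r t) /\ is_kernel (p t).
Hypothesis Hg : 0 <= g < 1.

Definition B := (A * 'I_T)%type.
Definition RB (s : S) (b : B) : R := r (b.2).+1 s b.1.
Definition QB (s : S) (b : B) (y : S) : R := p (b.2).+1 s b.1 y.
Definition Psig (sig : {ffun S -> B}) : S -> S -> R := fun s y => QB s (sig s) y.
Definition Rsig (sig : {ffun S -> B}) : S -> R := fun s => RB s (sig s).

Lemma RB01 s b : 0 <= RB s b <= 1.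
Proof. by have [h _] := Hrk (ltn0Sn b.2); apply: h. Qed.

Lemma QB_stoch (b : S -> B) : stoch (fun s y => QB s (b s) y).
Proof. by move=> s; have [_ h] := Hrk (ltn0Sn (b s).2); apply: h. Qed.

Lemma Psig_stoch sig : stoch (Psig sig).
Proof. exact: (QB_stoch sig). Qed.

Definition Vsig (sig : {ffun S -> B}) : S -> R :=
  projT1 (cid (disc_exists (Rsig sig) Hg (Psig_stoch sig))).

Lemma VsigE sig s : Vsig sig s = Rsig sig s + g * Pop (Psig sig) (Vsig sig) s.
Proof. by rewrite /Vsig; case: cid. Qed.

Let sig0 : {ffun S -> B} := [ffun _ => (a0, ord0)].

Definition sigstar : {ffun S -> B} :=
  projT1 (cid (ex_argmax (fun sig => \sum_(s : S) Vsig sig s) sig0)).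

Lemma sigstar_max sig : \sum_(s : S) Vsig sig s <= \sum_(s : S) Vsig sigstar s.
Proof. by rewrite /sigstar; case: cid => i /= H; apply: H. Qed.

Definition V := Vsig sigstar.

Lemma V2 s : V s = RB s (sigstar s) + g * Pop (Psig sigstar) V s.
Proof. exact: VsigE. Qed.

Lemma V0 s : 0 <= V s.
Proof.
apply: (min_principle (d := Rsig sigstar) Hg (Psig_stoch sigstar)).
  exact: V2.
by move=> u; have /andP[] := RB01 u (sigstar u).
Qed.

Lemma VM s : (1 - g) * V s <= 1.
Proof.
rewrite -subr_ge0.
apply: (min_principle (x := fun u => 1 - (1 - g) * V u)
   (d := fun u => (1 - g) * (1 - RB u (sigstar u))) Hg (Psig_stoch sigstar)).
- move=> u; rewrite PopD PopC ?PopN ?PopZ; last exact: Psig_stoch.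
  rewrite {1}V2; lra.
- move=> u; apply: mulr_ge0; first by case/andP: Hg => _ h; lra.
  by have /andP[_ h] := RB01 u (sigstar u); lra.
Qed.

Lemma V1 s b : RB s b + g * \sum_(y : S) QB s b y * V y <= V s.
Proof.
rewrite leNgt; apply/negP => hlt.
set sig' : {ffun S -> B} := [ffun x => if x == s then b else sigstar x].
set x := fun u => Vsig sig' u - V u.
set d := fun u => RB u (sig' u) + g * Pop (Psig sig') V u - V u.
have ex u : x u = d u + g * Pop (Psig sig') x u.
  rewrite /x /d {1}VsigE /Rsig /Pop.
  have -> : \sum_y Psig sig' u y * (Vsig sig' y - V y) =
            \sum_y Psig sig' u y * Vsig sig' y - \sum_y Psig sig' u y * V y.
    by rewrite -sumrB; apply: eq_bigr => y _; rewrite mulrBr.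
  rewrite /Pop; lra.
have d0 u : 0 <= d u.
  rewrite /d /Pop /Psig /sig' ffunE; case: eqP => [->|/eqP ne].
    by rewrite subr_ge0 ltW.
  by rewrite (V2 u) /Pop /Psig subrr.
have x0 := min_principle Hg (Psig_stoch sig') ex d0.
have ds : 0 < d s by rewrite /d /Pop /Psig /sig' ffunE eqxx subr_gt0.
have xs : 0 < x s.
  rewrite ex; apply: lt_le_trans ds _; rewrite lerDl.
  apply: mulr_ge0; first by case/andP: Hg.
  by apply: Pop_ge => //; apply: Psig_stoch.
have := sigstar_max sig'; rewrite -/V.
have : \sum_s V s < \sum_s Vsig sig' s.
  rewrite -subr_gt0 -sumrB (bigD1 s) //=.
  apply: lt_le_trans xs _; rewrite lerDl; apply: sumr_ge0 => u _; exact: x0.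
by move=> h1 h2; have := lt_le_trans h1 h2; rewrite ltxx.
Qed.


Hypothesis Hdiam : (diameter (p 1%N) <= D%:E)%E.

Lemma D_ge0 : 0 <= D.
Proof.
have Hin : ([set 0%E] `|` [set ereal_inf [set exp_hit_time (p 1%N) pi ss.1 ss.2 | pi in [set: S -> A]]
      | ss in [set ss : S * S | ss.1 != ss.2]]) 0%E by left.
have := ereal_sup_ubound Hin => h.
by rewrite -lee_fin; apply: le_trans h Hdiam.
Qed.

Lemma taboo_ge0 (pi : S -> A) s s' k y : 0 <= taboo (p 1%N) pi s' s k y.
Proof.
have [rr1 kk1] := Hrk (ltn0Sn 0).
elim: k y => [|k IH] y /=; first by apply: mulr_ge0; apply: ler0n.
apply: mulr_ge0; first exact: ler0n.
by apply: sumr_ge0 => x _; apply: mulr_ge0 => //; have [h _] := kk1 x (pi x).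
Qed.

Lemma span_eps s s' (pi : S -> A) e : s' != s ->
  (forall n, \sum_(0 <= k < n) prob_not_hit (p 1%N) pi s' s k <= e) ->
  V s - V s' <= e.
Proof.
move=> ss' He.
have [rr1 kk1] := Hrk (ltn0Sn 0).
set tb := taboo (p 1%N) pi s' s.
set pnh := prob_not_hit (p 1%N) pi s' s.
have pnhE k : pnh k = \sum_y tb k y by [].
set P1 := Pk (p 1%N) pi.
have sP1 : stoch P1 by apply: stoch_Pk.
have tb_ge0 k y : 0 <= tb k y.
  elim: k y => [|k IH] y /=; first by apply: mulr_ge0; apply: ler0n.
  apply: mulr_ge0; first exact: ler0n.
  by apply: sumr_ge0 => x _; apply: mulr_ge0 => //; have [h _] := kk1 x (pi x).
set F := fun k => \sum_x tb k x * P1 x s.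
have F_ge0 k : 0 <= F k.
  by apply: sumr_ge0 => x _; apply: mulr_ge0 => //; have [h _] := sP1 x.
have tstep f k : \sum_x tb k x * Pop P1 f x = F k * f s + \sum_y tb k.+1 y * f y.
  have e1 : \sum_x tb k x * Pop P1 f x = \sum_y (\sum_x tb k x * P1 x y) * f y.
    rewrite /Pop; under eq_bigr do rewrite mulr_sumr.
    rewrite exchange_big; apply: eq_bigr => y _; rewrite mulr_suml.
    by apply: eq_bigr => x _; rewrite mulrA.
  rewrite e1 (bigD1 s) //= [X in _ = _ + X](bigD1 s) //= /tb /= eqxx mul0r mul0r add0r.
  by congr (_ + _); apply: eq_bigr => y ys; rewrite ys mul1r.
have pstep k : pnh k = F k + pnh k.+1.
  have := tstep (fun _ => 1) k.
  under eq_bigr do rewrite PopC // mulr1.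
  by rewrite mulr1; under [X in _ = _ + X]eq_bigr do rewrite mulr1.
have tb0 f : \sum_y tb 0%N y * f y = f s'.
  rewrite -(sum_delta s' f); apply: eq_bigr => y _; rewrite /tb /=.
  case: (eqVneq y s') => [->|ne]; first by rewrite ?eqxx ss' !mul1r.
  by rewrite !mul0r.
have pnh0 : pnh 0%N = 1.
  by rewrite pnhE; have := tb0 (fun _ => 1); under eq_bigr do rewrite mulr1.
have Vsup y : g * Pop P1 V y <= V y.
  have := V1 y (pi y, ord0); rewrite /RB /QB /= => h.
  apply: le_trans h; rewrite lerDr; by have /andP[] := rr1 y (pi y).
have inv n : (1 - pnh n) * V s + \sum_y tb n y * V y - \sum_(0 <= k < n) pnh k <= V s'.
  elim: n => [|n IH].
    by rewrite pnh0 tb0 big_geq // subrr mul0r add0r subr0.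
  have key : F n * V s + \sum_y tb n.+1 y * V y - pnh n <= \sum_y tb n y * V y.
    have h1 : g * (F n * V s + \sum_y tb n.+1 y * V y) <= \sum_y tb n y * V y.
      rewrite -tstep mulr_sumr; apply: ler_sum => y _.
      by rewrite mulrCA; apply: ler_wpM2l => //.
    have h2 : (1 - g) * (F n * V s) <= F n.
      by rewrite mulrCA; apply: ler_piMr => //; apply: VM.
    have h3 : (1 - g) * (\sum_y tb n.+1 y * V y) <= pnh n.+1.
      rewrite pnhE mulr_sumr; apply: ler_sum => y _.
      by rewrite mulrCA; apply: ler_piMr => //; apply: VM.
    have := pstep n; nra.
  rewrite big_nat_recr //=.
  move: IH key; rewrite (pstep n) => IH key; lra.
have Ebd n : V s - V s' <= pnh n * V s + e.
  have := inv n; have := He n.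
  have : 0 <= \sum_y tb n y * V y by apply: sumr_ge0 => y _; apply: mulr_ge0 => //; apply: V0.
  lra.
have mono k m : pnh (k + m)%N <= pnh k.
  elim: m => [|m IH]; first by rewrite addn0.
  by rewrite addnS; apply: le_trans IH; rewrite (pstep (k + m)%N) lerDr.
have npnh n : n%:R * pnh n <= e.
  apply: le_trans (He n).
  have -> : n%:R * pnh n = \sum_(0 <= k < n) pnh n by rewrite sumr_const_nat subn0 mulr_natl.
  apply: ler_sum_nat => k /andP[_ kn].
  by have := mono k (n - k)%N; rewrite subnKC // ltnW.
rewrite -subr_le0; apply: (@archi_le0 _ _ (e * V s)) => n.
apply: le_trans (_ : n%:R * (pnh n * V s) <= _).
  apply: ler_wpM2l; first exact: ler0n.
  by have := Ebd n; lra.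
by rewrite mulrA; apply: ler_wpM2r => //; apply: V0.
Qed.

Lemma span s s' : V s - V s' <= D.
Proof.
case: (eqVneq s' s) => [->|ss']; first by rewrite subrr D_ge0.
apply/ler_addgt0Pr => e e0.
have Hin : ([set 0%E] `|` [set ereal_inf [set exp_hit_time (p 1%N) pi ss.1 ss.2 | pi in [set: S -> A]]
      | ss in [set ss : S * S | ss.1 != ss.2]])
      (ereal_inf [set exp_hit_time (p 1%N) pi s' s | pi in [set: S -> A]]).
  by right; exists (s', s).
have hle := le_trans (ereal_sup_ubound Hin) Hdiam.
have : (ereal_inf [set exp_hit_time (p 1%N) pi s' s | pi in [set: S -> A]] < (D + e)%:E)%E.
  by apply: le_lt_trans hle _; rewrite lte_fin ltrDl.
case/ereal_inf_lt => _ [pi _ <-] hpi.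
apply: (@span_eps s s' pi _ ss') => n.
have := @nneseries_lim_ge R (fun k => (prob_not_hit (p 1%N) pi s' s k)%:E) predT 0%N n.
move=> /(_ _) h.
have {}h : (\sum_(0 <= k < n) (prob_not_hit (p 1%N) pi s' s k)%:E <= exp_hit_time (p 1%N) pi s' s)%E.
  apply: h => k _ _; rewrite lee_fin; apply: sumr_ge0 => y _.
  exact: taboo_ge0.
by have := le_lt_trans h hpi; rewrite sumEFin lte_fin => /ltW.
Qed.


Lemma V1t t x a : (1 <= t <= T)%N -> r t x a + g * \sum_(y : S) p t x a y * V y <= V x.
Proof.
case/andP => t1 tT.
have lt : (t.-1 < T)%N by rewrite prednK.
by have := V1 x (a, Ordinal lt); rewrite /RB /QB /= prednK.
Qed.

Variable s0 : S.
Definition mV := projT1 (cid (ex_argmin V s0)).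
Definition MV := projT1 (cid (ex_argmax V s0)).
Lemma mVP y : V mV <= V y. Proof. by rewrite /mV; case: cid => i /= H; apply: H. Qed.
Lemma MVP y : V y <= V MV. Proof. by rewrite /MV; case: cid => i /= H; apply: H. Qed.

Lemma ER_bound (pi : hpolicy) : is_hpolicy pi ->
  forall n t h x, (1 <= t)%N -> (t + n <= T.+1)%N ->
  exp_return r p pi n t h x <= V x - V mV + n%:R * ((1 - g) * V MV).
Proof.
move=> hp; elim=> [|n IH] t h x t1 tn /=.
  by rewrite mul0r addr0 subr_ge0 mVP.
have tT : (t <= T)%N by move: tn; rewrite addnS ltnS => /(leq_trans (leq_addr _ _)).
have [rr kk] := Hrk t1.
have [pi0 pi1] := hp h x.
set c := (1 - g) * V MV.
have -> : V x - V mV + n.+1%:R * c = \sum_a pi h x a * (V x - V mV + n.+1%:R * c).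
  by rewrite -mulr_suml pi1 mul1r.
apply: ler_sum => a _; apply: ler_wpM2l => //.
have [p0 p1] := kk x a.
have h1 : \sum_y p t x a y * exp_return r p pi n t.+1 (rcons h (x, a)) y <=
          \sum_y p t x a y * (V y - V mV + n%:R * c).
  apply: ler_sum => y _; apply: ler_wpM2l => //; apply: IH => //.
  by rewrite addSnnS.
have h2 : \sum_y p t x a y * (V y - V mV + n%:R * c) =
          \sum_y p t x a y * V y - V mV + n%:R * c.
  have := PopD (fun _ y => p t x a y) V (fun _ => - V mV + n%:R * c) x.
  rewrite /Pop.
  under eq_bigr do rewrite addrA.
  move=> ->; rewrite -/(Pop (fun _ y => p t x a y) (fun _ => - V mV + n%:R * c) x).
  by rewrite PopC ?addrA // => z; apply: (kk z a).
have h3 := V1t x a (introT andP (conj t1 tT)).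
have h4 : \sum_y p t x a y * V y <= V MV.
  apply: (@Pop_le _ _ (fun _ y => p t x a y)) => //; last exact: MVP.
have g1 : 0 <= 1 - g by case/andP: Hg => _ hg1; lra.
have h5 : (1 - g) * \sum_y p t x a y * V y <= c by apply: ler_wpM2l.
rewrite mulrSr.
apply: le_trans (lerD (lexx (r t x a)) h1) _; rewrite h2; lra.
Qed.


Definition tau (s : S) (a : A) : nat :=
  if a == (sigstar s).1 then ((sigstar s).2).+1 else 1%N.
Definition rmix (s : S) (a : A) : R := r (tau s a) s a.
Definition pmix (s : S) (a : A) (y : S) : R := p (tau s a) s a y.
Definition pimix (s : S) : A := (sigstar s).1.

Lemma tau_range s a : (1 <= tau s a <= T)%N.
Proof. by rewrite /tau; case: ifP => _ //=; rewrite ltn_ord. Qed.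

Lemma rmix_reward : is_reward rmix.
Proof. by move=> s a; have [h _] := Hrk (proj1 (andP (tau_range s a))); apply: h. Qed.

Lemma pmix_kernel : is_kernel pmix.
Proof. by move=> s a; have [_ h] := Hrk (proj1 (andP (tau_range s a))); apply: h. Qed.

Lemma Ex_mono (q : S -> A -> S -> R) (pi : S -> A) s1 t (f h : S -> R) :
  is_kernel q -> (forall s, f s <= h s) -> Ex q pi s1 t f <= Ex q pi s1 t h.
Proof.
move=> kq fh; apply: ler_sum => s _; apply: ler_wpM2l; [exact: sd_ge0 | exact: fh].
Qed.

Lemma gain_mix s1 : (1 - g) * V mV <= gain rmix pmix pimix s1.
Proof.
have kq := pmix_kernel.
have PkE : Pk pmix pimix = Psig sigstar.
  by apply: funext => s; apply: funext => y; rewrite /Pk /pmix /pimix /tau eqxx.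
apply: (@gain_lb _ _ _ _ _ _ _ _ (V MV - V mV)) => // n.
rewrite ERS_Ex.
set c := (1 - g) * V mV.
have g1 : 0 <= 1 - g by case/andP: Hg => _ hg1; lra.
have step t : Ex pmix pimix s1 t V - Ex pmix pimix s1 t.+1 V + c <=
              Ex pmix pimix s1 t (fun s => rmix s (pimix s)).
  have e1 : Ex pmix pimix s1 t V - Ex pmix pimix s1 t.+1 V + c =
            Ex pmix pimix s1 t (fun s => V s + (- Pop (Psig sigstar) V s + c)).
    rewrite ExD ExD ExN Ex_succ PkE addrA; congr (_ + _).
    by rewrite Ex_fix // => s; apply: PopC; exact: stoch_Pk.
  rewrite e1; apply: Ex_mono => // s.
  have -> : rmix s (pimix s) = RB s (sigstar s) by rewrite /rmix /RB /pimix /tau eqxx.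
  have h1 : V mV <= Pop (Psig sigstar) V s by apply: Pop_ge; [apply: Psig_stoch | apply: mVP].
  have h2 : c <= (1 - g) * Pop (Psig sigstar) V s by apply: ler_wpM2l.
  have := V2 s; lra.
have sumst : \sum_(0 <= t < n) (Ex pmix pimix s1 t V - Ex pmix pimix s1 t.+1 V + c) =
             V s1 - Ex pmix pimix s1 n V + n%:R * c.
  rewrite big_split /= sumr_const_nat subn0 mulr_natl.
  have := telescope_sumr (fun t => Ex pmix pimix s1 t V) (leq0n n).
  rewrite Ex0 => e2; congr (_ + _).
  rewrite -[RHS]opprB -e2 -sumrN; apply: eq_bigr => t _; by rewrite opprB.
have h3 : Ex pmix pimix s1 n V <= V MV by apply: Ex_le => // s; apply: MVP.
have h4 := mVP s1.
apply: le_trans (_ : \sum_(0 <= t < n) (Ex pmix pimix s1 t V - Ex pmix pimix s1 t.+1 V + c) <= _).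
  rewrite sumst; lra.
by apply: ler_sum => t _; apply: step.
Qed.

Lemma sup_le_gen (E : set R) b : (forall x, E x -> x <= b) -> 0 <= b -> sup E <= b.
Proof.
move=> H b0; case: (pselect (E !=set0)) => [ne|ne]; first by apply: ge_sup.
have -> : E = set0.
  by apply/seteqP; split => x // Ex; exfalso; apply: ne; exists x.
by rewrite sup0.
Qed.

Variables (delta Vr Vp : R) (st : nat -> S) (act : nat -> A) (rew : nat -> R) (tk : nat).
Hypothesis Hpl : forall tau : nat, (1 <= tau <= T)%N ->
     plausible delta Vr Vp st act rew tk (r tau) (p tau).

Lemma mix_plausible : plausible delta Vr Vp st act rew tk rmix pmix.
Proof.
split; first exact: rmix_reward.
split; first exact: pmix_kernel.
by move=> s a; have [_ [_ H]] := Hpl (tau_range s a); apply: H.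
Qed.

Lemma rho_tilde_ge s1 : (1 - g) * V mV <= rho_tilde delta Vr Vp st act rew tk s1.
Proof.
apply: le_trans (gain_mix s1) _.
apply: le_trans (_ : rho_star rmix pmix s1 <= _).
  apply: le_sup01; last by exists pimix.
  by move=> y [pi _ <-]; have /andP[] := gain_01 pi s1 rmix_reward pmix_kernel.
apply: le_sup01; last by exists (rmix, pmix) => //; exact: mix_plausible.
move=> y [[r1 p1] [h1 [h2 _]] <-] /=.
by have /andP[] := rho_star_01 s1 h1 h2.
Qed.

Lemma core_bound s1 :
  vstar r p T s0 <= D + T%:R * rho_tilde delta Vr Vp st act rew tk s1 + T%:R * ((1 - g) * D).
Proof.
have g1 : 0 <= 1 - g by case/andP: Hg => _ hg1; lra.
set c := (1 - g) * V MV.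
have c0 : 0 <= c by apply: mulr_ge0 => //; apply: V0.
have h1 : vstar r p T s0 <= V s0 - V mV + T%:R * c.
  apply: sup_le_gen.
    move=> x [pi hp <-]; apply: ER_bound => //.
  apply: addr_ge0; first by rewrite subr_ge0 mVP.
  by apply: mulr_ge0 => //; apply: ler0n.
have h2 := span s0 mV.
have h3 : c <= (1 - g) * V mV + (1 - g) * D.
  rewrite -mulrDr; apply: ler_wpM2l => //; have := span MV mV; lra.
have h4 := rho_tilde_ge s1.
have T0 : 0 <= (T%:R : R) by apply: ler0n.
have h5 : T%:R * c <= T%:R * (rho_tilde delta Vr Vp st act rew tk s1) + T%:R * ((1 - g) * D).
  rewrite -mulrDr; apply: ler_wpM2l => //; lra.
lra.
Qed.

End Core.

Unset Implicit Arguments.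
Set Strict Implicit.

Theorem lemma6 (R : realType) (S A : finType)
  (r : nat -> S -> A -> R) (p : nat -> S -> A -> S -> R) (s1 : S) (D : R)
  (delta Vr Vp : R) (T : nat)
  (st : nat -> S) (act : nat -> A) (rew : nat -> R) (tk : nat) :
  (forall t : nat, (0 < t)%N ->
     [/\ is_reward (r t), is_kernel (p t), communicating (p t)
       & (diameter (p t) <= D%:E)%E]) ->
  0 < delta < 1 -> 0 <= Vr -> 0 <= Vp ->
  st 1%N = s1 -> (forall tau : nat, 0 <= rew tau <= 1) ->
  (1 <= tk <= T)%N ->
  (forall tau : nat, (1 <= tau <= T)%N ->
     plausible delta Vr Vp st act rew tk (r tau) (p tau)) ->
  forall s : S,
    vstar r p T s <= T%:R * rho_tilde delta Vr Vp st act rew tk s1 + D.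
Proof.
move=> H _ _ _ _ _ Htk Hpl s.
have Hrk t : (0 < t)%N -> is_reward (r t) /\ is_kernel (p t).
  by move=> t0; have [] := H t t0.
have Hdiam : (diameter (p 1%N) <= D%:E)%E by have [] := H 1%N isT.
have D0 := D_ge0 Hdiam.
case: T Htk Hpl => [|T']; first by case/andP=> h1 h2; have := leq_trans h1 h2.
move=> Htk Hpl.
have rho0 : 0 <= rho_tilde delta Vr Vp st act rew tk s1.
  rewrite /rho_tilde; apply: (fun h => proj1 (andP (sup_01 h))).
  move=> x [[r1 p1] [h1 [h2 _]] <-] /=; exact: rho_star_01.
case: (pickP (fun _ : A => true)) => [a0 _|noA]; last first.
  apply: sup_le_gen; last by apply: addr_ge0 => //; apply: mulr_ge0 => //; apply: ler0n.
  move=> x [pi hp _]; exfalso.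
  have [_ h] := hp [::] s; move: h; rewrite big_pred0 // => /eqP.
  by rewrite eq_sym oner_eq0.
set rt := rho_tilde delta Vr Vp st act rew tk s1.
rewrite -subr_le0.
set a := vstar r p T'.+1 s - (T'.+1%:R * rt + D).
apply: (@archi_le0 R a (T'.+1%:R * D - a)) => k.
set g : R := 1 - (k.+1%:R)^-1.
have kp : (0 : R) < k.+1%:R by rewrite ltr0n.
have Hg : 0 <= g < 1.
  rewrite /g subr_ge0 gtrBl invr_gt0 kp andbT invf_le1 // ler1n //.
have cb := core_bound a0 Hrk Hg Hdiam s Hpl s1.
have e1 : 1 - g = (k.+1%:R)^-1 by rewrite /g opprB addrC subrK.
rewrite e1 in cb.
have h : k.+1%:R * a <= T'.+1%:R * D.
  have : a <= T'.+1%:R * ((k.+1%:R)^-1 * D).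
    rewrite lerBlDl; apply: (le_trans cb); by rewrite [D + _]addrC.
  move=> ha; rewrite -(ler_pdivlMl _ _ kp).
  by rewrite mulrCA mulrC in ha; rewrite mulrC.
have : k.+1%:R * a = k%:R * a + a by rewrite mulrSr mulrDl mul1r.
lra.
Qed.
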